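(* Let $\mathcal{G}=(\mathcal{V},\mathcal{E},\mathbf{W})$ be a weighted undirected graph with node set $\mathcal{V}=\{1,\dots,N\}$ and symmetric nonnegative weights $W_{i,j}$, equipped with an arbitrary fixed orientation. Let $\mathcal{F}=\{\mathcal{C}_1,\dots,\mathcal{C}_{|\mathcal{F}|}\}$ be a partition of $\mathcal{V}$ into pairwise disjoint clusters, let $x:\mathcal{V}\to\mathbb{R}$ be any graph signal, and let $\mathcal{M}\subseteq\mathcal{V}$ be a sampling set satisfying NNSP-$\mathcal{F}$ with $\kappa=2$. Then every solution $\hat{x}$ of $$\min_{\tilde{x}:\mathcal{V}\to\mathbb{R}} \|\tilde{x}\|_{\rm TV}\quad\text{subject to}\quad \tilde{x}[i]=x[i]\ \text{for all } i\in\mathcal{M}$$ satisfies $$\|\hat{x}-x\|_{\rm TV}\le 6\min_{\mathbf{a}\in\mathbb{R}^{|\mathcal{F}|}}\Big\|x-\sum_{\mathcal{C}\in\mathcal{F}} a_{\mathcal{C}}\mathcal{I}_{\mathcal{C}}\Big\|_{\rm TV}.$$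
   Context: $\mathcal{I}_{\mathcal{C}}[i]=1$ if $i\in\mathcal{C}$ and $0$ otherwise. For a graph signal $x:\mathcal{V}\to\mathbb{R}$ the total variation is $\|x\|_{\rm TV}=\sum_{\{i,j\}\in\mathcal{E}} W_{i,j}|x[i]-x[j]|$. The orientation declares for each edge $e=\{i,j\}$ one endpoint the head $e^{+}$ and the other the tail $e^{-}$; $\mathcal{N}^{+}(i)$ is the set of neighbours $j$ of $i$ such that $i$ is the head of $\{i,j\}$, and $\mathcal{N}^{-}(i)$ the set of neighbours $j$ such that $i$ is the tail. The boundary of the partition is $\partial\mathcal{F}=\{\{i,j\}\in\mathcal{E}: i\in\mathcal{C}_l, j\in\mathcal{C}_{l'}, l\neq l'\}$. A flow with demands $g:\mathcal{V}\to\mathbb{R}$ is a map $f:\mathcal{E}\to\mathbb{R}$ with $\sum_{j\in\mathcal{N}^{+}(i)} f[\{i,j\}]-\sum_{j\in\mathcal{N}^{-}(i)} f[\{i,j\}]=g[i]$ for every $i\in\mathcal{V}$. ''$\mathcal{M}$ satisfies NNSP-$\mathcal{F}$ with $\kappa=2$'' means: for every signature $\sigma\in\{-1,1\}^{\partial\mathcal{F}}$ there is a flow $f$ whose demands satisfy $g[i]=0$ for all $i\notin\mathcal{M}$, with $f[e]=2\sigma_e W_e$ for every $e\in\partial\mathcal{F}$ and $|f[e]|\le W_e$ for every $e\in\mathcal{E}\setminus\partial\mathcal{F}$. *)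

(* Defs.v *)
From mathcomp Require Import all_boot all_order all_algebra.
Set Implicit Arguments. Unset Strict Implicit. Unset Printing Implicit Defensive.
Import Order.TTheory GRing.Theory Num.Theory.
Local Open Scope ring_scope.

(* An oriented weighted graph on a finite node set V:
   E i j  means {i,j} is an edge whose head is i and tail is j
   (each undirected edge appears in exactly one orientation). *)

Section Graph.
Variables (R : realFieldType) (V : finType).
Variables (E : rel V) (W : V -> V -> R).

Definition oriented := forall i j : V, E i j -> ~~ E j i.

Definition TV (x : V -> R) : R :=
  \sum_(p : V * V | E p.1 p.2) W p.1 p.2 * `|x p.1 - x p.2|.

Definition indic (C : {set V}) : V -> R := fun i => (i \in C)%:R.

Definition boundary (P : {set {set V}}) (i j : V) : bool :=
  E i j && (pblock P i != pblock P j).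

Definition demand (f : V -> V -> R) (i : V) : R :=
  \sum_(j | E i j) f i j - \sum_(j | E j i) f j i.

Definition NNSP2 (P : {set {set V}}) (M : {set V}) : Prop :=
  forall sigma : V -> V -> bool,
  exists f : V -> V -> R,
    (forall i, i \notin M -> demand f i = 0) /\
    (forall i j, boundary P i j ->
        f i j = 2 * (if sigma i j then 1 else -1) * W i j) /\
    (forall i j, E i j -> ~~ boundary P i j -> `|f i j| <= W i j).

Definition TV_min_solution (M : {set V}) (x xhat : V -> R) : Prop :=
  (forall i, i \in M -> xhat i = x i) /\
  (forall y : V -> R, (forall i, i \in M -> y i = x i) -> TV xhat <= TV y).

End Graph.

(* Main.v *)
Require Import Defs.
From mathcomp Require Import all_boot all_order all_algebra.
From mathcomp Require Import ring lra.
Import Order.TTheory GRing.Theory Num.Theory.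
Local Open Scope ring_scope.

Section Aux.
Variables (R : realFieldType) (V : finType) (E : rel V).

Lemma flow_id (f : V -> V -> R) (u : V -> R) :
  \sum_i u i * demand E f i =
  \sum_(p : V * V | E p.1 p.2) f p.1 p.2 * (u p.1 - u p.2).
Proof.
rewrite /demand.
under eq_bigr => i _ do rewrite mulrBr !mulr_sumr.
rewrite sumrB.
rewrite (exchange_big_dep xpredT) //=.
rewrite !pair_big_dep /=.
under [RHS]eq_bigr => p _ do rewrite mulrBr.
have swI : injective (fun p : V * V => (p.2, p.1)) by move=> [? ?] [? ?] [-> ->].
rewrite sumrB; congr (_ - _); rewrite (reindex_inj swI) /=;
  by apply: eq_bigr => p _; rewrite mulrC.
Qed.

Variable (W : V -> V -> R) (P : {set {set V}}).

Lemma split_TV (F : V * V -> R) :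
  \sum_(p : V * V | E p.1 p.2) F p =
  \sum_(p : V * V | boundary E P p.1 p.2) F p +
  \sum_(p : V * V | E p.1 p.2 && ~~ boundary E P p.1 p.2) F p.
Proof.
rewrite (bigID (fun p : V * V => boundary E P p.1 p.2)) /=; congr (_ + _).
by apply: eq_bigl => p; rewrite /boundary; case: (E _ _).
Qed.

Lemma indic_same (hP : partition P [set: V]) (a : {set V} -> R) i j :
  pblock P i = pblock P j ->
  \sum_(C in P) a C * indic R C i = \sum_(C in P) a C * indic R C j.
Proof.
case/and3P: hP => /eqP cov triv _ eqb.
apply: eq_bigr => C CP; rewrite /indic.
suff -> : (i \in C) = (j \in C) by [].
have key : forall k, (k \in C) = (pblock P k == C).
  move=> k; apply/idP/eqP => [kC|<-]; first exact: def_pblock.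
  by rewrite mem_pblock cov inE.
by rewrite !key eqb.
Qed.

End Aux.

Theorem theorem2 (R : realFieldType) (V : finType) (E : rel V) (W : V -> V -> R)
  (hE : oriented E)
  (hWsym : forall i j, W i j = W j i) (hWpos : forall i j, 0 <= W i j)
  (P : {set {set V}}) (hP : partition P [set: V])
  (x : V -> R) (M : {set V}) (hM : NNSP2 E W P M)
  (xhat : V -> R) (hxhat : TV_min_solution E W M x xhat) :
  forall a : {set V} -> R,
    TV E W (fun i => xhat i - x i)
      <= 6 * TV E W (fun i => x i - \sum_(C in P) a C * indic R C i).
Proof.
move=> a.
set u := fun i => xhat i - x i.
set s := fun i => \sum_(C in P) a C * indic R C i.
set z := fun i => x i - s i.
set tv := fun (y : V -> R) (p : V * V) => W p.1 p.2 * `|y p.1 - y p.2|.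
set Sb := fun F : V * V -> R => \sum_(p : V * V | boundary E P p.1 p.2) F p.
set Si := fun F : V * V -> R =>
  \sum_(p : V * V | E p.1 p.2 && ~~ boundary E P p.1 p.2) F p.
have TVs : forall y, TV E W y = Sb (tv y) + Si (tv y).
  by move=> y; rewrite /TV (@split_TV _ _ E P).
have tv0 : forall y p, 0 <= tv y p.
  by move=> y p; rewrite /tv mulr_ge0.
have Sb0 : forall y, 0 <= Sb (tv y) by move=> y; apply: sumr_ge0 => p _.
case: hxhat => hxM hmin.
have st1 : 2 * Sb (tv u) <= Si (tv u).
  have [f [fdem [fb fi]]] := hM (fun i j => 0 <= u i - u j).
  have z0 : \sum_i u i * demand E f i = 0.
    apply: big1 => i _; case: (boolP (i \in M)) => iM.
      by rewrite /u hxM // subrr mul0r.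
    by rewrite fdem // mulr0.
  rewrite flow_id (@split_TV _ _ E P) in z0.
  have eb : \sum_(p : V * V | boundary E P p.1 p.2) f p.1 p.2 * (u p.1 - u p.2)
      = 2 * Sb (tv u).
    rewrite /Sb mulr_sumr; apply: eq_bigr => p bp; rewrite fb // /tv.
    case: ifP => h.
      by rewrite (ger0_norm h); ring.
    have h' : u p.1 - u p.2 < 0 by rewrite ltNge h.
    by rewrite (ltr0_norm h'); ring.
  have ei : - \sum_(p : V * V | E p.1 p.2 && ~~ boundary E P p.1 p.2)
        f p.1 p.2 * (u p.1 - u p.2) <= Si (tv u).
    rewrite -sumrN; apply: ler_sum => p /andP [ep nb].
    rewrite /tv; apply: (le_trans (ler_norm _)).
    rewrite normrN normrM ler_wpM2r //; exact: fi.
  rewrite eb in z0; lra.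
have st2 : Si (tv u) <= Sb (tv u) + 2 * Si (tv z).
  have h := hmin x (fun i _ => erefl).
  rewrite !TVs in h.
  have hb : Sb (tv x) - Sb (tv u) <= Sb (tv xhat).
    rewrite /Sb -sumrB; apply: ler_sum => p _; rewrite /tv -mulrBr ler_wpM2l //.
    rewrite lerBlDr.
    have e : x p.1 - x p.2 = (xhat p.1 - xhat p.2) + - (u p.1 - u p.2)
      by rewrite /u; ring.
    by rewrite e; apply: le_trans (ler_normD _ _) _; rewrite normrN.
  have hi : Si (tv u) - Si (tv z) <= Si (tv xhat).
    rewrite /Si -sumrB; apply: ler_sum => p /andP [ep nb].
    have sp : s p.1 = s p.2.
      apply: indic_same => //; move: nb; rewrite /boundary ep /=.
      by move/negPn/eqP.
    rewrite /tv -mulrBr ler_wpM2l // lerBlDr.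
    have e : u p.1 - u p.2 = (xhat p.1 - xhat p.2) + - (z p.1 - z p.2)
      by rewrite /u /z sp; ring.
    by rewrite e; apply: le_trans (ler_normD _ _) _; rewrite normrN.
  have hxz : Si (tv x) = Si (tv z).
    apply: eq_bigr => p /andP [ep nb].
    have sp : s p.1 = s p.2.
      apply: indic_same => //; move: nb; rewrite /boundary ep /=.
      by move/negPn/eqP.
    by rewrite /tv /z sp; congr (_ * `|_|); ring.
  lra.
have hu := Sb0 u; have hz := Sb0 z.
rewrite (TVs u) (TVs z); lra.
Qed.
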